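(* Let $\Gamma=(V,E)$ be a finite connected undirected graph and let $(u_{ij})$ be the generators of $C(G_{aut}^+(\Gamma))$. Let $i,j,k,l\in V$ with $d(i,k)=d(j,l)=m$, let $p\neq j$ be a vertex with $d(p,l)=m$, and let $q$ be a vertex with $d(q,l)=s$ and $d(j,q)\neq d(q,p)$. Then $$u_{ij}\Big(\sum_{t\in V:\ d(t,j)=d(t,p)=m,\ d(t,q)=s}u_{kt}\Big)u_{ip}=0.$$ In particular, if $l$ is the only vertex $t$ satisfying $d(t,q)=s$, $d(t,j)=m$ and $d(t,p)=m$, then $u_{ij}u_{kl}u_{ip}=0$.
   Context: $\Gamma$ is a finite simple connected undirected graph on $V=\{1,\dots,n\}$, $d$ the graph distance. $C(G_{aut}^+(\Gamma))$ is the universal unital $C^*$-algebra generated by $u_{ij}$, $1\le i,j\le n$, with relations: (R1) $u_{ij}=u_{ij}^*=u_{ij}^2$; (R2) $\sum_{l} u_{il}=1=\sum_{l} u_{li}$ for all $i$; (R3) $u_{ij}u_{kl}=u_{kl}u_{ij}=0$ whenever exactly one of $(i,k)\in E$, $(j,l)\in E$ holds. *)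

(* Defs.v *)
From Stdlib Require Import Reals.
From mathcomp Require Import all_boot.

Set Implicit Arguments.
Unset Strict Implicit.
Unset Printing Implicit Defensive.

Local Open Scope R_scope.
Record Cpx := MkC { Re : R ; Im : R }.

Definition C0 : Cpx := MkC 0 0.
Definition C1 : Cpx := MkC 1 0.
Definition Cadd (a b : Cpx) : Cpx := MkC (Re a + Re b) (Im a + Im b).
Definition Cmul (a b : Cpx) : Cpx :=
  MkC (Re a * Re b - Im a * Im b) (Re a * Im b + Im a * Re b).
Definition Cconj (a : Cpx) : Cpx := MkC (Re a) (- Im a).
Definition Cabs (a : Cpx) : R := sqrt (Re a * Re a + Im a * Im a).

Record CStarAlgebra := {
  car :> Type;
  cz : car;
  co : car;
  cadd : car -> car -> car;
  copp : car -> car;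
  cmul : car -> car -> car;
  csc : Cpx -> car -> car;
  cstar : car -> car;
  cnorm : car -> R;
  caddA : forall x y z, cadd x (cadd y z) = cadd (cadd x y) z;
  caddC : forall x y, cadd x y = cadd y x;
  cadd0 : forall x, cadd cz x = x;
  caddN : forall x, cadd (copp x) x = cz;
  cscDr : forall c x y, csc c (cadd x y) = cadd (csc c x) (csc c y);
  cscDl : forall c d x, csc (Cadd c d) x = cadd (csc c x) (csc d x);
  cscA : forall c d x, csc (Cmul c d) x = csc c (csc d x);
  csc1 : forall x, csc C1 x = x;
  cmulA : forall x y z, cmul x (cmul y z) = cmul (cmul x y) z;
  cmul1l : forall x, cmul co x = x;
  cmul1r : forall x, cmul x co = x;
  cmulDl : forall x y z, cmul (cadd x y) z = cadd (cmul x z) (cmul y z);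
  cmulDr : forall x y z, cmul x (cadd y z) = cadd (cmul x y) (cmul x z);
  cmulZl : forall c x y, cmul (csc c x) y = csc c (cmul x y);
  cmulZr : forall c x y, cmul x (csc c y) = csc c (cmul x y);
  cstarK : forall x, cstar (cstar x) = x;
  cstarD : forall x y, cstar (cadd x y) = cadd (cstar x) (cstar y);
  cstarM : forall x y, cstar (cmul x y) = cmul (cstar y) (cstar x);
  cstarZ : forall c x, cstar (csc c x) = csc (Cconj c) (cstar x);
  cnorm_eq0 : forall x, cnorm x = 0 -> x = cz;
  cnormD : forall x y, (cnorm (cadd x y) <= cnorm x + cnorm y);
  cnormZ : forall c x, cnorm (csc c x) = (Cabs c * cnorm x);
  cnormM : forall x y, (cnorm (cmul x y) <= cnorm x * cnorm y);
  cnorm_cstar : forall x, cnorm (cmul (cstar x) x) = (cnorm x * cnorm x);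
  ccomplete : forall s : nat -> car,
    (forall eps : R, (0 < eps) -> exists N : nat, forall n m : nat,
        (N <= n)%coq_nat -> (N <= m)%coq_nat ->
        (cnorm (cadd (s n) (copp (s m))) < eps)) ->
    exists L : car, forall eps : R, (0 < eps) -> exists N : nat,
        forall n : nat, (N <= n)%coq_nat -> (cnorm (cadd (s n) (copp L)) < eps)
}.

Local Close Scope R_scope.
Fixpoint walk (T : finType) (e : rel T) (k : nat) (x y : T) : bool :=
  match k with
  | 0 => x == y
  | k'.+1 => [exists z, e x z && walk e k' z y]
  end.

(* graph distance: least k with a walk of length k from x to y
   (for connected graphs this is < #|T|, so searching 0..#|T|-1 suffices). *)
Definition gdist (T : finType) (e : rel T) (x y : T) : nat :=
  find (fun k => walk e k x y) (iota 0 #|T|).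

(* The three defining relations of C(G_aut^+(Gamma)) *)
Definition qaut_rel (T : finType) (e : rel T) (A : CStarAlgebra) (u : T -> T -> A) : Prop :=
  (forall i j, u i j = cstar (u i j) /\ u i j = cmul (u i j) (u i j)) /\
  (forall i, \big[@cadd A / cz A]_(l : T) u i l = co A /\
             \big[@cadd A / cz A]_(l : T) u l i = co A) /\
  (forall i j k l, e i k != e j l ->
     cmul (u i j) (u k l) = cz A /\ cmul (u k l) (u i j) = cz A).

(* Main.v *)
Require Import Defs.
From Stdlib Require Import Reals Lra ZArith.
From HB Require Import structures.
From mathcomp Require Import all_boot.

Set Implicit Arguments.
Unset Strict Implicit.
Unset Printing Implicit Defensive.

Lemma cadd0r (A : CStarAlgebra) (x : A) : cadd x (cz A) = x.
Proof. by rewrite caddC cadd0. Qed.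

HB.instance Definition _ (A : CStarAlgebra) :=
  Monoid.isComLaw.Build (car A) (cz A) (@cadd A) (@caddA A) (@caddC A) (@cadd0 A).

Section Alg.
Variable A : CStarAlgebra.
Local Infix "⊕" := (@cadd A) (at level 50, left associativity).
Local Infix "⊗" := (@cmul A) (at level 40, left associativity).
Local Notation "0" := (cz A).
Local Notation "1" := (co A).

Lemma addIr (x y z : A) : x ⊕ y = x ⊕ z -> y = z.
Proof.
move=> h; have := congr1 (cadd (copp x)) h.
by rewrite !caddA caddN !cadd0.
Qed.

Lemma addxx (y : A) : y = y ⊕ y -> y = 0.
Proof. by move=> h; apply: (@addIr y); rewrite cadd0r -h. Qed.

Lemma mulr0 (x : A) : x ⊗ 0 = 0.
Proof. apply: addxx; by rewrite -cmulDr cadd0. Qed.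
Lemma mul0r (x : A) : 0 ⊗ x = 0.
Proof. apply: addxx; by rewrite -cmulDl cadd0. Qed.

Lemma sum_mulr (I : finType) (P : pred I) (F : I -> A) (y : A) :
  (\big[@cadd A/0]_(i | P i) F i) ⊗ y = \big[@cadd A/0]_(i | P i) (F i ⊗ y).
Proof.
by apply: (big_morph (fun x : A => x ⊗ y)); [move=> a b; rewrite cmulDl | rewrite mul0r].
Qed.
Lemma mulr_sum (I : finType) (P : pred I) (F : I -> A) (y : A) :
  y ⊗ (\big[@cadd A/0]_(i | P i) F i) = \big[@cadd A/0]_(i | P i) (y ⊗ F i).
Proof.
by apply: (big_morph (fun x : A => y ⊗ x)); [move=> a b; rewrite cmulDr | rewrite mulr0].
Qed.
End Alg.

Section Scal.
Variable A : CStarAlgebra.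
Local Infix "⊕" := (@cadd A) (at level 50, left associativity).
Local Infix "⊗" := (@cmul A) (at level 40, left associativity).
Local Open Scope R_scope.

Lemma Cpx_eq (a b c d : R) : a = c -> b = d -> MkC a b = MkC c d.
Proof. by move=> -> ->. Qed.

Lemma sc0 (x : A) : csc Defs.C0 x = cz A.
Proof.
apply: addxx.
rewrite -cscDl; congr csc; rewrite /Cadd /Defs.C0 /=; apply: Cpx_eq; ring.
Qed.

Lemma oppE (x : A) : copp x = csc (MkC (-1) 0) x.
Proof.
apply: (@addIr A x); rewrite caddC caddN.
rewrite -{1}(csc1 x) -cscDl -(sc0 x); congr csc.
rewrite /Cadd /Defs.C1 /Defs.C0 /=; apply: Cpx_eq; ring.
Qed.

Lemma Cabs_real (r : R) : Cabs (MkC r 0) = Rabs r.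
Proof. rewrite /Cabs /=; rewrite Rmult_0_l Rplus_0_r; exact: sqrt_Rsqr_abs. Qed.

Lemma cnorm0 : cnorm (cz A) = 0.
Proof. by rewrite -(sc0 (cz A)) cnormZ /Cabs /= Rmult_0_l Rplus_0_r sqrt_0 Rmult_0_l. Qed.

Lemma cnormN (x : A) : cnorm (copp x) = cnorm x.
Proof. by rewrite oppE cnormZ Cabs_real Rabs_Ropp Rabs_R1 Rmult_1_l. Qed.

Lemma cnorm_ge0 (x : A) : 0 <= cnorm x.
Proof.
have := cnormD (copp x) x; rewrite caddN cnorm0 cnormN; lra.
Qed.

Lemma cnorm_sc (r : R) (x : A) : cnorm (csc (MkC r 0) x) = Rabs r * cnorm x.
Proof. by rewrite cnormZ Cabs_real. Qed.

Definition half := MkC (/2) 0.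

Lemma half_bound (u v : A) : cnorm u <= 1 -> cnorm v <= 1 -> cnorm (csc half (u ⊕ v)) <= 1.
Proof.
move=> hu hv; rewrite cnorm_sc Rabs_right; last lra.
have := cnormD u v; lra.
Qed.

Lemma sq_bound (z : A) : cnorm z <= 1 -> cnorm (z ⊗ z) <= 1.
Proof.
move=> h; have := cnormM z z; have := cnorm_ge0 z; nra.
Qed.

Definition lin2 (x y : A) a b := csc a x ⊕ csc b y.
Definition lin3 (x y z : A) a b c := csc a x ⊕ csc b y ⊕ csc c z.

Lemma add4 (x y z w : A) : (x ⊕ y) ⊕ (z ⊕ w) = (x ⊕ z) ⊕ (y ⊕ w).
Proof. by rewrite -!caddA (caddA y) (caddC y) -caddA. Qed.

Lemma lin3_add x y z a b c a' b' c' :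
  lin3 x y z a b c ⊕ lin3 x y z a' b' c' = lin3 x y z (Cadd a a') (Cadd b b') (Cadd c c').
Proof. by rewrite /lin3 !cscDl add4; congr (_ ⊕ _); rewrite add4. Qed.

Lemma lin3_sc x y z s a b c :
  csc s (lin3 x y z a b c) = lin3 x y z (Cmul s a) (Cmul s b) (Cmul s c).
Proof. by rewrite /lin3 !cscDr !cscA. Qed.

Lemma lin3_eq x y z a b c a' b' c' : a = a' -> b = b' -> c = c' ->
  lin3 x y z a b c = lin3 x y z a' b' c'.
Proof. by move=> -> -> ->. Qed.

Lemma lin3_2 x y z a b c a' b' : c = Defs.C0 -> a = a' -> b = b' ->
  lin3 x y z a b c = lin2 x y a' b'.
Proof. by move=> -> -> ->; rewrite /lin3 sc0 cadd0r. Qed.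

Section AL.
Variables (Q k : A).
Hypotheses (HQs : cstar Q = Q) (HQQ : Q ⊗ Q = Q) (Hks : cstar k = k)
  (HQk : Q ⊗ k = k) (HkQ : k ⊗ Q = k).

Lemma lin2_mul a b a' b' :
  lin2 Q k a b ⊗ lin2 Q k a' b' =
  lin3 Q k (k ⊗ k) (Cmul a a') (Cadd (Cmul a b') (Cmul b a')) (Cmul b b').
Proof.
rewrite /lin2 /lin3 cmulDl !cmulDr !cmulZl !cmulZr -!cscA HQQ HQk HkQ.
by rewrite cscDl -!caddA (caddA (csc _ k)).
Qed.

Definition Nrm c := cnorm (lin2 Q k Defs.C1 c).

Ltac cpx := rewrite /Cconj /Cmul /Cadd /Defs.C1 /Defs.C0 /half /=; apply: Cpx_eq; field.

Lemma stepN (x y : R) : Nrm (MkC x y) <= 1 -> Nrm (MkC (-y) x) <= 1 ->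
  Nrm (MkC y (-x)) <= 1 -> Nrm (MkC (2*x) (2*y)) <= 1.
Proof.
move=> h1 h2 h3.
set X := lin2 Q k Defs.C1 (MkC x y) ⊗ lin2 Q k Defs.C1 (MkC x y).
set Y1 := lin2 Q k Defs.C1 (MkC (-y) x) ⊗ lin2 Q k Defs.C1 (MkC (-y) x).
set Y2 := lin2 Q k Defs.C1 (MkC y (-x)) ⊗ lin2 Q k Defs.C1 (MkC y (-x)).
have ea : csc half (X ⊕ Y1) = lin2 Q k Defs.C1 (MkC (x - y) (x + y)).
  rewrite /X /Y1 !lin2_mul lin3_add lin3_sc; apply: lin3_2; cpx.
have eb : csc half (X ⊕ Y2) = lin2 Q k Defs.C1 (MkC (x + y) (y - x)).
  rewrite /X /Y2 !lin2_mul lin3_add lin3_sc; apply: lin3_2; cpx.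
have ha : cnorm (lin2 Q k Defs.C1 (MkC (x - y) (x + y))) <= 1.
  by rewrite -ea; apply: half_bound; apply: sq_bound.
have hb : cnorm (lin2 Q k Defs.C1 (MkC (x + y) (y - x))) <= 1.
  by rewrite -eb; apply: half_bound; apply: sq_bound.
have e : csc half (lin2 Q k Defs.C1 (MkC (x - y) (x + y)) ⊗ lin2 Q k Defs.C1 (MkC (x - y) (x + y))
   ⊕ lin2 Q k Defs.C1 (MkC (x + y) (y - x)) ⊗ lin2 Q k Defs.C1 (MkC (x + y) (y - x)))
   = lin2 Q k Defs.C1 (MkC (2*x) (2*y)).
  rewrite !lin2_mul lin3_add lin3_sc; apply: lin3_2; cpx.
rewrite /Nrm -e; apply: half_bound; exact: sq_bound.
Qed.

Lemma baseN (r : R) : Nrm (MkC r 0) <= 1 -> Nrm (MkC (-r) 0) <= 1 -> Nrm (MkC 0 r) <= 1.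
Proof.
move=> h1 h2.
set y := lin2 Q k Defs.C1 (MkC 0 r).
have ey : cstar y = lin2 Q k Defs.C1 (MkC 0 (-r)).
  rewrite /y /lin2 cstarD !cstarZ HQs Hks; congr (_ ⊕ _); congr csc; cpx.
have e : cstar y ⊗ y = csc half (lin2 Q k Defs.C1 (MkC r 0) ⊗ lin2 Q k Defs.C1 (MkC r 0)
   ⊕ lin2 Q k Defs.C1 (MkC (-r) 0) ⊗ lin2 Q k Defs.C1 (MkC (-r) 0)).
  rewrite ey !lin2_mul lin3_add lin3_sc; apply: lin3_eq; cpx.
have : cnorm y * cnorm y <= 1.
  by rewrite -cnorm_cstar e; apply: half_bound; apply: sq_bound.
rewrite /Nrm -/y; have := cnorm_ge0 y; nra.
Qed.

Definition RR t := Nrm (MkC t 0) <= 1 /\ Nrm (MkC (-t) 0) <= 1 /\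
                   Nrm (MkC 0 t) <= 1 /\ Nrm (MkC 0 (-t)) <= 1.

Lemma RR2 t : RR t -> RR (2 * t).
Proof.
case=> [h1 [h2 [h3 h4]]].
have e0 : forall z, 2 * z = 2 * z by [].
split; [|split; [|split]].
- have := @stepN t 0; rewrite Ropp_0 Rmult_0_r; apply=> //.
- have := @stepN (-t) 0; rewrite Ropp_0 Rmult_0_r Ropp_involutive -Ropp_mult_distr_r; apply=> //.
- have := @stepN 0 t; rewrite Rmult_0_r; apply=> //; by rewrite Ropp_0.
- have := @stepN 0 (-t); rewrite Rmult_0_r Ropp_involutive -Ropp_mult_distr_r; apply=> //.
  by rewrite Ropp_0.
Qed.

Lemma pow2_ge (n : nat) : INR n <= 2 ^ n.
Proof.
elim: n => [|n IH]; first by simpl; lra.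
rewrite S_INR /=; have := @pow_R1_Rle 2 n ltac:(lra); lra.
Qed.

Lemma AL (r : R) : 0 < r -> Nrm (MkC r 0) <= 1 -> Nrm (MkC (-r) 0) <= 1 -> k = cz A.
Proof.
move=> r0 h1 h2.
have hR : RR r.
  split=> //; split=> //; split; first exact: baseN.
  apply: baseN; rewrite ?Ropp_involutive //.
have hn : forall n, RR (2 ^ n * r).
  elim=> [|n IH]; first by rewrite /= Rmult_1_l.
  by rewrite /= Rmult_assoc; apply: RR2.
have bnd : forall n, 2 ^ n * r * cnorm k <= 1 + cnorm Q.
  move=> n; case: (hn n) => h _.
  have e : csc (MkC (2 ^ n * r) 0) k = lin2 Q k Defs.C1 (MkC (2 ^ n * r) 0) ⊕ copp Q.
    by rewrite /lin2 csc1 caddC caddA caddN cadd0.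
  have := cnormD (lin2 Q k Defs.C1 (MkC (2 ^ n * r) 0)) (copp Q).
  rewrite -e cnorm_sc cnormN Rabs_right; last first.
    by apply: Rle_ge; apply: Rmult_le_pos; [apply: pow_le|]; lra.
  rewrite /Nrm in h; lra.
apply: cnorm_eq0.
have k0 := cnorm_ge0 k; have Q0 := cnorm_ge0 Q.
case: (Req_dec (cnorm k) 0) => // hk.
have kp : 0 < cnorm k by lra.
have [hn1 _] := archimed ((1 + cnorm Q) / (r * cnorm k)).
have hpos : 0 < r * cnorm k by nra.
have : (1 + cnorm Q) / (r * cnorm k) < INR (Z.to_nat (up ((1 + cnorm Q) / (r * cnorm k)))).
  rewrite INR_IZR_INZ Z2Nat.id; first lra.
  have : 0 <= (1 + cnorm Q) / (r * cnorm k).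
    by apply: Rmult_le_pos; [lra | apply: Rlt_le; apply: Rinv_0_lt_compat; lra].
  move=> h0; apply: le_IZR; lra.
move=> hlt; have := bnd (Z.to_nat (up ((1 + cnorm Q) / (r * cnorm k)))).
have := pow2_ge (Z.to_nat (up ((1 + cnorm Q) / (r * cnorm k)))).
set M := INR _; set P := 2 ^ _ => hP hb.
have : (1 + cnorm Q) < M * (r * cnorm k).
  have := Rmult_lt_compat_r _ _ _ hpos hlt.
  rewrite /Rdiv Rmult_assoc Rinv_l ?Rmult_1_r //; lra.
nra.
Qed.
End AL.
End Scal.

Section Orth.
Variable A : CStarAlgebra.
Local Infix "⊕" := (@cadd A) (at level 50, left associativity).
Local Infix "⊗" := (@cmul A) (at level 40, left associativity).
Local Open Scope R_scope.

Definition m1 := MkC (-1) 0.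
Ltac cpx := rewrite /m1 /Cconj /Cmul /Cadd /Defs.C1 /Defs.C0 /half /=; apply: Cpx_eq; field.


Lemma proj_norm (P : A) : cstar P = P -> P ⊗ P = P -> cnorm P <= 1.
Proof.
move=> h1 h2; have := cnorm_cstar P; rewrite h1 h2 => e.
have := cnorm_ge0 P; nra.
Qed.

Lemma cstar1 : cstar (co A) = co A.
Proof. have e := cstarM (cstar (co A)) (co A); rewrite cmul1r cstarK cmul1r in e; by rewrite -e. Qed.

Lemma lin2_add (x y : A) a b a' b' :
  lin2 x y a b ⊕ lin2 x y a' b' = lin2 x y (Cadd a a') (Cadd b b').
Proof. by rewrite /lin2 !cscDl add4. Qed.

Lemma lin2_sc (x y : A) s a b :
  csc s (lin2 x y a b) = lin2 x y (Cmul s a) (Cmul s b).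
Proof. by rewrite /lin2 !cscDr !cscA. Qed.

Lemma lin2_eq (x y : A) a b a' b' : a = a' -> b = b' -> lin2 x y a b = lin2 x y a' b'.
Proof. by move=> -> ->. Qed.

Lemma lin2_l (x y : A) a : lin2 x y a Defs.C0 = csc a x.
Proof. by rewrite /lin2 sc0 cadd0r. Qed.

Lemma compl_proj (P : A) : cstar P = P -> P ⊗ P = P ->
  cstar (co A ⊕ copp P) = co A ⊕ copp P /\ (co A ⊕ copp P) ⊗ (co A ⊕ copp P) = co A ⊕ copp P.
Proof.
move=> h1 h2; rewrite oppE; split.
  rewrite cstarD cstarZ cstar1 h1; congr (_ ⊕ csc _ _); cpx.
have e : co A ⊕ csc (MkC (-1) 0) P = lin2 (co A) P Defs.C1 m1 by rewrite /lin2 csc1.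
rewrite e lin2_mul ?cmul1l ?cmul1r // h2.
rewrite /lin3 /lin2 -caddA -cscDl; congr (_ ⊕ _); congr csc; cpx.
Qed.

Lemma norm3 (x y z : A) : cnorm x <= 1 -> cnorm y <= 1 -> cnorm z <= 1 -> cnorm (x ⊗ y ⊗ z) <= 1.
Proof.
move=> hx hy hz.
have := cnormM (x ⊗ y) z; have := cnormM x y.
have := cnorm_ge0 x; have := cnorm_ge0 y; have := cnorm_ge0 z; have := cnorm_ge0 (x ⊗ y).
nra.
Qed.

Variables (I : finType) (p : I -> A).
Hypotheses (Hps : forall l, cstar (p l) = p l) (Hpp : forall l, p l ⊗ p l = p l)
  (Hsum : \big[@cadd A / cz A]_(l : I) p l = co A).

Lemma orth1 b d : b != d -> p d ⊗ p b = cz A.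
Proof.
move=> bd.
set Q := p b.
pose h l := Q ⊗ p l ⊗ Q.
have bnd : forall l, cnorm (Q ⊕ copp (h l)) <= 1.
  move=> l.
  have e : Q ⊕ copp (h l) = Q ⊗ (co A ⊕ copp (p l)) ⊗ Q.
    rewrite /h !oppE cmulDr cmul1r cmulDl cmulZr cmulZl Hpp //.
  rewrite e; have [c1 c2] := compl_proj (Hps l) (Hpp l).
  by apply: norm3; apply: proj_norm => //; rewrite /Q ?Hps ?Hpp.
have sumQ : \big[@cadd A / cz A]_(l : I) h l = Q.
  rewrite /h -sum_mulr -mulr_sum Hsum cmul1r Hpp //.
have s1 : \big[@cadd A / cz A]_(l | l != b) h l = cz A.
  move: sumQ; rewrite (bigD1 b) //= /h Hpp Hpp -/Q => e.
  apply: (@addIr A Q); by rewrite cadd0r.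
set M := \big[@cadd A / cz A]_(l | (l != b) && (l != d)) h l.
have hdM : h d = copp M.
  move: s1; rewrite (bigD1 d) 1?eq_sym //= -/M => e.
  apply: (@addIr A M); by rewrite caddC e caddC caddN.
set n := (\sum_(l | (l != b) && (l != d)) 1)%N.
have cnt : cnorm (csc (MkC (INR n) 0) Q ⊕ copp M) <= INR n.
  rewrite /M /n.
  apply: (big_ind2 (fun x (m : nat) => cnorm (csc (MkC (INR m) 0) Q ⊕ copp x) <= INR m)).
  - simpl; rewrite (_ : MkC 0 0 = Defs.C0) //.
    rewrite sc0 cadd0 -(cadd0r (copp (cz A))) caddN cnorm0; lra.
  - move=> x1 x2 y1 y2 h1 h2.
    have e : csc (MkC (INR (x2 + y2)) 0) Q ⊕ copp (x1 ⊕ y1) =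
      (csc (MkC (INR x2) 0) Q ⊕ copp x1) ⊕ (csc (MkC (INR y2) 0) Q ⊕ copp y1).
      rewrite add4 -cscDl !oppE -cscDr; congr (csc _ _ ⊕ _).
      rewrite plus_INR /Cadd /=; apply: Cpx_eq; ring.
    rewrite e plus_INR; have := cnormD (csc (MkC (INR x2) 0) Q ⊕ copp x1)
      (csc (MkC (INR y2) 0) Q ⊕ copp y1); lra.
  - move=> l _; rewrite /= csc1 /=; exact: bnd l.
have hds : cstar (h d) = h d by rewrite /h !cstarM Hps /Q Hps cmulA.
have hQs : cstar Q = Q by rewrite /Q Hps.
have hQQ : Q ⊗ Q = Q by rewrite /Q Hpp.
have hQk : Q ⊗ h d = h d by rewrite /h !cmulA hQQ.
have hkQ : h d ⊗ Q = h d by rewrite /h -cmulA hQQ.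
have n0 := pos_INR n.
set r := / (INR n + 1).
have r0 : 0 < r by apply: Rinv_0_lt_compat; lra.
have r1 : r <= 1.
  rewrite /r -Rinv_1; apply: Rinv_le_contravar; lra.
have Q1 : cnorm Q <= 1 by apply: proj_norm.
have hd0 : h d = cz A.
  apply: (AL hQs hQQ hds hQk hkQ r0).
  - rewrite /Nrm.
    have e : lin2 Q (h d) Defs.C1 (MkC r 0) =
      csc (MkC r 0) Q ⊕ csc (MkC r 0) (csc (MkC (INR n) 0) Q ⊕ copp M).
      rewrite hdM !oppE -(lin2_l Q M (MkC r 0)).
      have -> : csc (MkC (INR n) 0) Q ⊕ csc (MkC (-1) 0) M = lin2 Q M (MkC (INR n) 0) m1 by [].
      rewrite lin2_sc lin2_add /lin2 -cscA; congr (_ ⊕ _); congr csc.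
        rewrite /r; cpx; lra.
      rewrite /r; cpx; lra.
    rewrite e; have := cnormD (csc (MkC r 0) Q) (csc (MkC r 0) (csc (MkC (INR n) 0) Q ⊕ copp M)).
    rewrite !cnorm_sc Rabs_right; last lra.
    have : r * cnorm Q <= r * 1 by apply: Rmult_le_compat_l; lra.
    have : r * cnorm (csc (MkC (INR n) 0) Q ⊕ copp M) <= r * INR n by apply: Rmult_le_compat_l; lra.
    have : r * 1 + r * INR n = 1 by rewrite /r; field; lra.
    lra.
  - rewrite /Nrm.
    have e : lin2 Q (h d) Defs.C1 (MkC (- r) 0) =
      csc (MkC (1 - r) 0) Q ⊕ csc (MkC r 0) (Q ⊕ copp (h d)).
      rewrite oppE -(lin2_l Q (h d) (MkC (1 - r) 0)).
      have -> : Q ⊕ csc (MkC (-1) 0) (h d) = lin2 Q (h d) Defs.C1 m1 by rewrite /lin2 csc1.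
      rewrite lin2_sc lin2_add; apply: lin2_eq; cpx.
    rewrite e; have := cnormD (csc (MkC (1 - r) 0) Q) (csc (MkC r 0) (Q ⊕ copp (h d))).
    rewrite !cnorm_sc (Rabs_right r); last lra.
    rewrite Rabs_right; last lra.
    have := bnd d.
    have : (1 - r) * cnorm Q <= (1 - r) * 1 by apply: Rmult_le_compat_l; lra.
    move=> h1 h2.
    have : r * cnorm (Q ⊕ copp (h d)) <= r * 1 by apply: Rmult_le_compat_l; lra.
    lra.
set x := p d ⊗ Q.
have : cstar x ⊗ x = cz A.
  by rewrite /x cstarM Hps hQs -cmulA (cmulA (p d)) Hpp cmulA.
move=> e; apply: cnorm_eq0; have := cnorm_cstar x; rewrite e cnorm0 => e2.
have := cnorm_ge0 x; nra.
Qed.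

Lemma orth b d : b != d -> p b ⊗ p d = cz A.
Proof. by move=> bd; apply: orth1; rewrite eq_sym. Qed.
End Orth.

Section Graph.
Variables (T : finType) (e : rel T).

Lemma walkS_r n x y : walk e n.+1 x y = [exists z, walk e n x z && e z y].
Proof.
elim: n x => [|n IH] x.
  rewrite /=; apply/existsP/existsP => [[z /andP[h /eqP zy]]|[z /andP[/eqP xz h]]].
    by exists x; rewrite eqxx -zy.
  by exists y; rewrite eqxx xz h.
have -> : walk e n.+2 x y = [exists z, e x z && walk e n.+1 z y] by []. apply/existsP/existsP.
  move=> [z /andP[h1 h2]]; move: h2; rewrite IH => /existsP[w /andP[h3 h4]].
  exists w; rewrite h4 andbT; apply/existsP; exists z; by rewrite h1.
move=> [w /andP[/existsP[z /andP[h1 h2]] h3]].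
exists z; rewrite h1 [walk e n.+1 z y]IH /=; apply/existsP; exists w; apply/andP; split; [exact: h2 | exact: h3].
Qed.

Hypothesis e_sym : symmetric e.

Lemma walk_sym n x y : walk e n x y = walk e n y x.
Proof.
elim: n x y => [|n IH] x y; first by rewrite /= eq_sym.
rewrite walkS_r /=; apply/existsP/existsP => [[z /andP[h1 h2]]|[z /andP[h1 h2]]];
  exists z; by rewrite IH e_sym h1 h2.
Qed.

Lemma gdist_sym x y : gdist e x y = gdist e y x.
Proof. by rewrite /gdist; apply: eq_find => k; rewrite walk_sym. Qed.

Lemma walk_gdist_le n x y : walk e n x y -> gdist e x y <= n.
Proof.
move=> w; rewrite leqNgt; apply/negP => lt.
have hs : gdist e x y <= size (iota 0 #|T|) by apply: find_size.
rewrite size_iota in hs.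
have := before_find 0 lt; rewrite nth_iota; last by apply: (leq_trans lt).
by rewrite add0n w.
Qed.

Lemma path_walk x p : path e x p -> walk e (size p) x (last x p).
Proof.
elim: p x => [|y p IH] x /=; first by rewrite eqxx.
move=> /andP[h1 h2]; apply/existsP; exists y; by rewrite h1 IH.
Qed.

Hypothesis e_conn : forall x y : T, connect e x y.

Lemma gdist_walk x y : walk e (gdist e x y) x y.
Proof.
have : has (fun k => walk e k x y) (iota 0 #|T|).
  have /connectP[p pp ->] := e_conn x y.
  case: (shortenP pp) => p' pp' up' _.
  apply/hasP; exists (size p'); last exact: path_walk.
  rewrite mem_iota add0n /=.
  have : size (x :: p') <= #|T| by rewrite -(card_uniqP up'); exact: max_card.
  done.
move=> h; have := nth_find 0 h; rewrite nth_iota ?add0n //.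
by move: h; rewrite has_find size_iota.
Qed.
End Graph.

Section Main.
Variables (T : finType) (e : rel T).
Hypotheses (e_sym : symmetric e) (e_conn : forall x y : T, connect e x y).
Variables (A : CStarAlgebra) (u : T -> T -> A).
Hypothesis Hu : qaut_rel e u.
Local Infix "⊕" := (@cadd A) (at level 50, left associativity).
Local Infix "⊗" := (@cmul A) (at level 40, left associativity).

Let Hs i j : cstar (u i j) = u i j. Proof. by case: Hu => h _; case: (h i j). Qed.
Let Hp i j : u i j ⊗ u i j = u i j. Proof. by case: Hu => h _; case: (h i j). Qed.
Let Hrow i : \big[@cadd A / cz A]_(l : T) u i l = co A.
Proof. by case: Hu => _ [h _]; case: (h i). Qed.
Let Hcol i : \big[@cadd A / cz A]_(l : T) u l i = co A.
Proof. by case: Hu => _ [h _]; case: (h i). Qed.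
Let R3 i j k l : e i k != e j l -> u i j ⊗ u k l = cz A.
Proof. by case: Hu => _ [_ h] /h []. Qed.

Lemma F1 n : forall a c b d, walk e n a c -> ~~ walk e n b d -> u a b ⊗ u c d = cz A.
Proof.
elim: n => [|n IH] a c b d /=.
  move=> /eqP <- bd; exact: (orth (Hs a) (Hp a) (Hrow a)).
move=> /existsP[z /andP[az zc]] nbd.
rewrite -(cmul1r (u a b)) -(Hrow z) mulr_sum sum_mulr; apply: big1 => y _.
case eby: (e b y).
  have nyd : ~~ walk e n y d.
    apply/negP => w; move/negP: nbd; apply; apply/existsP; exists y; by rewrite eby.
  by rewrite -cmulA (IH z c y d) // mulr0.
by rewrite (R3 (i:=a) (j:=b)) ?mul0r // az eby.
Qed.

Lemma F2 n : forall b d a c, walk e n b d -> ~~ walk e n a c -> u a b ⊗ u c d = cz A.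
Proof.
elim: n => [|n IH] b d a c /=.
  move=> /eqP <- ac; exact: (orth (p := fun l => u l b) (fun l => Hs l b) (fun l => Hp l b) (Hcol b)).
move=> /existsP[z /andP[bz zd]] nac.
rewrite -(cmul1r (u a b)) -(Hcol z) mulr_sum sum_mulr; apply: big1 => x _.
case eax: (e a x).
  have nxc : ~~ walk e n x c.
    apply/negP => w; move/negP: nac; apply; apply/existsP; exists x; by rewrite eax.
  by rewrite -cmulA (IH z d x c) // mulr0.
by rewrite (R3 (i:=a) (j:=b)) ?mul0r // bz eax.
Qed.

Lemma D a b c d : gdist e a c != gdist e b d -> u a b ⊗ u c d = cz A.
Proof.
move=> ne; case: (ltngtP (gdist e a c) (gdist e b d)) => h.
- apply: (F1 (gdist_walk e_conn a c)); apply/negP => w.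
  by move: (walk_gdist_le w); rewrite leqNgt h.
- apply: (F2 (gdist_walk e_conn b d)); apply/negP => w.
  by move: (walk_gdist_le w); rewrite leqNgt h.
- by rewrite h eqxx in ne.
Qed.
End Main.

Unset Implicit Arguments.
Set Strict Implicit.

Theorem lemma3p7 (T : finType) (e : rel T)
  (e_sym : symmetric e) (e_irr : irreflexive e)
  (e_conn : forall x y : T, connect e x y)
  (A : CStarAlgebra) (u : T -> T -> A) (Hu : qaut_rel e u)
  (i j k l p q : T) (m s : nat)
  (Hik : gdist e i k = m) (Hjl : gdist e j l = m)
  (Hpj : p != j) (Hpl : gdist e p l = m)
  (Hql : gdist e q l = s) (Hjq : gdist e j q != gdist e q p) :
  cmul (cmul (u i j)
          (\big[@cadd A / cz A]_(t : T | [&& gdist e t j == m,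
                                               gdist e t p == m & gdist e t q == s])
              u k t))
       (u i p) = cz A
  /\
  ((forall t : T, [&& gdist e t q == s, gdist e t j == m & gdist e t p == m] = (t == l)) ->
   cmul (cmul (u i j) (u k l)) (u i p) = cz A).
Proof.
have DD := D e_conn Hu.
have Hrow : forall i, \big[@cadd A / cz A]_(l : T) u i l = co A.
  by move=> i0; case: Hu => _ [h _]; case: (h i0).
have Hcol : forall i, \big[@cadd A / cz A]_(l : T) u l i = co A.
  by move=> i0; case: Hu => _ [h _]; case: (h i0).
have main : cmul (cmul (u i j)
          (\big[@cadd A / cz A]_(t : T | [&& gdist e t j == m,
                                               gdist e t p == m & gdist e t q == s])
              u k t)) (u i p) = cz A.
  rewrite mulr_sum sum_mulr.
  pose F t := cmul (cmul (u i j) (u k t)) (u i p).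
  have -> : \big[@cadd A / cz A]_(t | [&& gdist e t j == m, gdist e t p == m & gdist e t q == s])
      F t = \big[@cadd A / cz A]_(t | gdist e t q == s) F t.
    rewrite big_mkcond [RHS]big_mkcond; apply: eq_bigr => t _.
    case: (gdist e t q == s); rewrite ?andbT ?andbF //.
    case hj: (gdist e t j == m); last first.
      rewrite /F (DD i j k t) ?mul0r //.
      by rewrite Hik gdist_sym // eq_sym hj.
    case hp: (gdist e t p == m) => //=.
    rewrite /F -cmulA (DD k t i p) ?mulr0 //.
    by rewrite gdist_sym // Hik eq_sym hp.
  have -> : \big[@cadd A / cz A]_(t | gdist e t q == s) F t =
     \big[@cadd A / cz A]_(t | gdist e t q == s) \big[@cadd A / cz A]_(a : T)
        cmul (cmul (cmul (u i j) (u k t)) (u a q)) (u i p).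
    apply: eq_bigr => t _.
    by rewrite /F -sum_mulr -mulr_sum Hcol cmul1r.
  rewrite exchange_big; apply: big1 => a _.
  case hka: (gdist e k a == s).
    rewrite big_rmcond; last first.
      move=> t ht; rewrite -(cmulA (u i j)) (DD k t a q) ?mulr0 ?mul0r //.
      by rewrite (eqP hka) eq_sym.
    rewrite -sum_mulr -sum_mulr -mulr_sum Hrow cmul1r.
    case hia: (gdist e i a == gdist e j q).
      rewrite -cmulA (DD a q i p) ?mulr0 //.
      by rewrite gdist_sym // (eqP hia).
    by rewrite (DD i j a q) ?mul0r // hia.
  apply: big1 => t ht.
  rewrite -(cmulA (u i j)) (DD k t a q) ?mulr0 ?mul0r //.
  by rewrite (eqP ht) hka.
split=> // hl.
have <- : \big[@cadd A / cz A]_(t : T | [&& gdist e t j == m,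
                   gdist e t p == m & gdist e t q == s]) u k t = u k l.
  apply: big_pred1 => t /=; rewrite -hl.
  by case: (gdist e t j == m); case: (gdist e t p == m); case: (gdist e t q == s).
exact: main.
Qed.
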